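(* Let $p$ be a prime, let $r$ be a positive integer, let $V\subseteq\mathbb{Z}_p^r$, and let $S\subseteq\mathbb{N}$ be an infinite subset. For each $1\le k\le r$ let $P_k\in\mathbb{Z}_p\langle z\rangle$, and define $P\colon S\to\mathbb{Z}_p^r$ by $P(n)=(P_1(n),\dots,P_r(n))$. Suppose that for every $y\in\mathbb{Z}_p^r\setminus V$ the set $\{n\in S\colon P(n)=y\}$ is empty, and for every $y\in V$ the set $\{n\in S\colon P(n)=y\}$ is finite. Then there exists $N\ge 0$ such that $$|\{n\in S\colon P(n)=y\}|\le N$$ for all $y\in V$.
   Context: $\mathbb{Q}_p\langle z\rangle$ denotes the ring of strictly convergent power series $\sum_{n\ge0}a_nz^n\in\mathbb{Q}_p[[z]]$ with $|a_n|_p\to0$; the Gauss norm is $|\sum a_nz^n|_{\rm Gauss}=\max_n|a_n|_p$, and $\mathbb{Z}_p\langle z\rangle$ is the subring of elements of Gauss norm at most $1$ (i.e. with all $a_n\in\mathbb{Z}_p$). Such series converge on $\mathbb{Z}_p$, so $P_k(n)$ is defined for $n\in\mathbb{N}$. Here $\mathbb{N}=\{0,1,2,\dots\}$. *)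

(* Defs.v *)
From mathcomp Require Import all_boot.
Set Implicit Arguments. Unset Strict Implicit. Unset Printing Implicit Defensive.

(* A p-adic integer x in Z_p is represented by its sequence of residues:
   x k = (x mod p^k) in [0, p^k), with compatibility x k = x (k+1) mod p^k.
   Two p-adic integers are equal iff their residue sequences are equal. *)
Definition is_Zp (p : nat) (x : nat -> nat) : Prop :=
  forall k, x k < p ^ k /\ x k = x k.+1 %% p ^ k.

(* An element sum_m a_m z^m of Z_p<z>: coefficients a m in Z_p with
   |a_m|_p -> 0, i.e. for every k, a_m = 0 mod p^k for all large m. *)
Definition is_ZpTate (p : nat) (a : nat -> nat -> nat) : Prop :=
  (forall m, is_Zp p (a m)) /\
  (forall k, exists M, forall m, M <= m -> a m k = 0).

(* "a(n) = y": the p-adically convergent series sum_m a_m n^m equals y,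
   i.e. modulo each p^k the partial sums stabilise at y k. *)
Definition ps_eval_is (p : nat) (a : nat -> nat -> nat) (n : nat)
    (y : nat -> nat) : Prop :=
  forall k, exists M, forall M', M <= M' ->
    y k = (\sum_(m < M') a m k * n ^ m) %% p ^ k.

Definition fiber (p r : nat) (P : 'I_r -> nat -> nat -> nat) (S : nat -> Prop)
    (y : 'I_r -> nat -> nat) (n : nat) : Prop :=
  S n /\ forall i, ps_eval_is p (P i) n (y i).

Definition is_Zp_vec (p r : nat) (y : 'I_r -> nat -> nat) : Prop :=
  forall i, is_Zp p (y i).

Definition finite_set (A : nat -> Prop) : Prop :=
  exists s : seq nat, forall n, A n -> n \in s.

Definition card_le (A : nat -> Prop) (N : nat) : Prop :=
  forall s : seq nat, uniq s -> (forall n, n \in s -> A n) -> size s <= N.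

Definition infinite_set (A : nat -> Prop) : Prop :=
  forall m, exists n, m <= n /\ A n.

(* Main.v *)
Require Import Defs.
From mathcomp Require Import all_boot all_algebra zify.
From Stdlib Require Import Classical.
Import GRing.Theory Num.Theory.
Set Implicit Arguments. Unset Strict Implicit. Unset Printing Implicit Defensive.
Module Aux1.
Lemma cancel_nat p a D u X : prime p -> p ^ (a + D) %| u * X -> 0 < u -> u < p ^ D ->
  p ^ a %| X.
Proof.
move=> pp hd u0 uD.
have p1 : 1 < p by apply: prime_gt1.
case: (posnP X) => [->|X0]; first by rewrite dvdn0.
rewrite pfactor_dvdn // in hd; last by rewrite muln_gt0 u0.
rewrite lognM // in hd.
have lu : logn p u < D.
  have : p ^ logn p u <= u by apply: dvdn_leq => //; rewrite pfactor_dvdn.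
  move=> h; rewrite -(ltn_exp2l _ _ p1); exact: leq_ltn_trans h uD.
rewrite pfactor_dvdn //.
rewrite -(leq_add2r D) (leq_trans hd) // addnC leq_add2l; exact: ltnW.
Qed.

Local Open Scope ring_scope.

Lemma cancel_int (p a D : nat) (u X : int) : prime p ->
  (((p ^ (a + D))%:Z) %| u * X)%Z -> u != 0 -> (`|u| < p ^ D)%N ->
  ((p ^ a)%:Z %| X)%Z.
Proof.
move=> pp hd u0 uD.
rewrite !dvdzE in hd *.
rewrite abszM in hd.
apply: (cancel_nat pp hd) => //.
by rewrite absz_gt0.
Qed.

Lemma intr_Zp0 (m : nat) (z : int) : (1 < m)%N -> ((m%:Z) %| z)%Z ->
  (z%:~R : 'Z_m) = 0.
Proof.
move=> m1 /dvdzP [q ->].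
rewrite intrM.
have -> : ((m%:Z)%:~R : 'Z_m) = 0.
  by apply: val_inj => /=; rewrite [LHS](val_Zp_nat m1) modnn.
by rewrite mulr0.
Qed.

Lemma key (p k D : nat) : prime p -> (1 < p ^ k)%N -> forall (xs : seq nat) (Q : {poly int}),
  uniq xs -> (forall x, x \in xs -> (x < p ^ D)%N) ->
  (forall x y, x \in xs -> y \in xs ->
     ((p ^ (k + (size xs).-1 * D))%:Z %| Q.[x%:Z] - Q.[y%:Z])%Z) ->
  (1 < size (map_poly (intr : int -> 'Z_(p ^ k)) Q))%N ->
  (size xs < size (map_poly (intr : int -> 'Z_(p ^ k)) Q))%N.
Proof.
move=> pp pk1; elim=> [|x0 rest IH] Q //=.
  by move=> _ _ _ /ltnW.
move=> /andP[x0n urest] hlt hdv hs.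
case E: rest => [|x1 rest']; first by [].
rewrite -E.
have : root (Q - (Q.[x0%:Z])%:P) x0%:Z by rewrite rootE !hornerE subrr.
move/factor_theorem => [q hq].
have hQ : Q = q * ('X - (x0%:Z)%:P) + (Q.[x0%:Z])%:P by rewrite -hq subrK.
set f := (intr : int -> 'Z_(p ^ k)).
have hmQ : map_poly f Q = map_poly f q * ('X - (f x0%:Z)%:P) + (f Q.[x0%:Z])%:P.
  by rewrite [in LHS]hQ rmorphD rmorphM /= map_polyXsubC map_polyC.
have mq0 : map_poly f q != 0.
  apply/negP => /eqP h; move: hs; rewrite hmQ h mul0r add0r size_polyC.
  by case: (_ != 0).
have hsz : size (map_poly f Q) = (size (map_poly f q)).+1.
  rewrite hmQ size_polyDl; last first.
    rewrite size_Mmonic ?monicXsubC // size_XsubC addn2 /=.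
    apply: (leq_ltn_trans (size_polyC_leq1 _)).
    by rewrite ltnS lt0n size_poly_eq0.
  by rewrite size_Mmonic ?monicXsubC // size_XsubC addn2.
have hdq : forall x, x \in rest ->
    ((p ^ (k + (size rest).-1 * D))%:Z %| q.[x%:Z])%Z.
  move=> x xr.
  have xin : x \in x0 :: rest by rewrite inE xr orbT.
  have x0in : x0 \in x0 :: rest by rewrite inE eqxx.
  have := hdv x x0 xin x0in.
  have e : Q.[x%:Z] - Q.[x0%:Z] = q.[x%:Z] * (x%:Z - x0%:Z).
    by have := congr1 (fun P => P.[x%:Z]) hq; rewrite /= !hornerE.
  rewrite e => h.
  apply: (@cancel_int p _ D (x%:Z - x0%:Z)).
  - exact: pp.
  - rewrite mulrC; move: h.
    have -> : (k + (size rest).-1 * D + D = k + size rest * D)%N.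
      by rewrite E /=; lia.
    by [].
  - rewrite subr_eq0; apply/negP => /eqP [] hx; move: x0n; rewrite -hx xr.
    by [].
  - have h1 := hlt x xin.
    have h2 := hlt x0 x0in.
    lia.
case: (ltnP 1 (size (map_poly f q))) => hq1.
  rewrite hsz ltnS; apply: IH => //.
  - by move=> x xr; apply: hlt; rewrite inE xr orbT.
  - by move=> x y xr yr; apply: rpredB; apply: hdq.
have /size_poly1P [c c0 hc] : size (map_poly f q) == 1%N.
  by rewrite eqn_leq hq1 lt0n size_poly_eq0.
have x1r : x1 \in rest by rewrite E inE eqxx.
have : (map_poly f q).[f x1%:Z] = 0.
  rewrite horner_map /f; apply: intr_Zp0 => //.
  apply: dvdz_trans (hdq _ x1r).
  by rewrite dvdzE /= dvdn_exp2l // leq_addr.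
by rewrite hc hornerC => /eqP; rewrite (negbTE c0).
Qed.
End Aux1. Import Aux1.
Module Aux2.

Lemma Zp_trunc_mod p x k L : is_Zp p x -> k <= L -> x L %% p ^ k = x k.
Proof.
move=> hx /subnKC <-; elim: (L - k) => [|d IH].
  by rewrite addn0 modn_small //; case: (hx k).
rewrite addnS -IH.
have [_ ->] := hx (k + d).
by rewrite modn_dvdm // dvdn_exp2l // leq_addr.
Qed.

Lemma common_bound (Pr : nat -> nat -> Prop) (s : seq nat) :
  (forall x, x \in s -> exists M, forall M', M <= M' -> Pr x M') ->
  exists M, forall x, x \in s -> forall M', M <= M' -> Pr x M'.
Proof.
elim: s => [|x s IH] h; first by exists 0.
have [M1 h1] := h x (mem_head _ _).
have [M2 h2] : exists M, forall x, x \in s -> forall M', M <= M' -> Pr x M'.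
  by apply: IH => y ys; apply: h; rewrite inE ys orbT.
exists (maxn M1 M2) => y; rewrite inE => /orP [/eqP ->|ys] M' hM.
  by apply: h1; apply: leq_trans hM; rewrite leq_maxl.
by apply: h2 => //; apply: leq_trans hM; rewrite leq_maxr.
Qed.

Lemma le_sumn (s : seq nat) x : x \in s -> x <= sumn s.
Proof.
elim: s => [|y s IH] //; rewrite inE => /orP [/eqP ->|xs] /=; first exact: leq_addr.
by apply: leq_trans (IH xs) _; rewrite leq_addl.
Qed.

Local Open Scope ring_scope.

Lemma caseA p (a : nat -> nat -> nat) k m0 M (c : nat -> nat) (s : seq nat) :
  prime p -> is_ZpTate p a -> (0 < m0)%N -> a m0 k != 0%N ->
  (forall m, (M <= m)%N -> a m k = 0%N) ->
  uniq s -> (forall n, n \in s -> ps_eval_is p a n c) -> (size s <= M)%N.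
Proof.
move=> pp [hZ hT] m00 am0 hM us hs.
have pk1 : (1 < p ^ k)%N.
  have [h _] := hZ m0 k; move: am0 h; lia.
have m0M : (m0 < M)%N.
  by rewrite ltnNge; apply/negP => /hM; apply/eqP.
set D := (sumn s).+1.
have hlt : forall x, x \in s -> (x < p ^ D)%N.
  move=> x xs; apply: leq_ltn_trans (le_sumn xs) _.
  apply: ltn_trans (ltnSn _) _; apply: ltn_expl; exact: prime_gt1.
set L := (k + (size s).-1 * D)%N.
have [Mst hst] := @common_bound (fun x M2 => c L = (\sum_(m < M2) a m L * x ^ m) %% p ^ L)%N
  s (fun x xs => hs x xs L).
set M' := maxn Mst M.
set F : {poly int} := \poly_(m < M') (a m L)%:Z.
set f := (intr : int -> 'Z_(p ^ k)).
have coefF : forall j, (j < M')%N -> (map_poly f F)`_j = (a j k)%:R.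
  move=> j jM; rewrite coef_map coef_poly jM /f.
  apply: val_inj; rewrite /= [X in _ = X](val_Zp_nat pk1).
  rewrite -(Zp_trunc_mod (hZ j) (leq_addr _ k : (k <= L)%N)).
  rewrite modn_mod -(val_Zp_nat pk1); by [].
have sF1 : (1 < size (map_poly f F))%N.
  apply: leq_ltn_trans m00 _; rewrite ltnNge; apply/negP => /leq_sizeP /(_ m0 (leqnn _)).
  rewrite coefF; last by apply: leq_trans m0M _; rewrite leq_maxr.
  move/(congr1 val); rewrite /= (val_Zp_nat pk1) modn_small; last by case: (hZ m0 k).
  by apply/eqP.
have sFM : (size (map_poly f F) <= M)%N.
  apply/leq_sizeP => j hj.
  case: (ltnP j M') => jM'.
    by rewrite coefF // hM.
  by rewrite coef_map coef_poly ltnNge jM' /= /f.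
have evF : forall x, F.[x%:Z] = ((\sum_(m < M') a m L * x ^ m)%N)%:Z.
  move=> x; rewrite horner_poly -[RHS]natz natr_sum; apply: eq_bigr => i _.
  by rewrite natrM natrX !natz.
apply: leq_trans sFM; apply: ltnW; apply: (@key p k D pp pk1) => // x y xs ys.
rewrite !evF -eqz_mod_dvd; apply/eqP; rewrite !modz_nat; congr Posz.
by rewrite -!(hst _ _ M') // leq_maxl.
Qed.
End Aux2. Import Aux2.
Theorem lemma2p1 (p r : nat) (V : ('I_r -> nat -> nat) -> Prop)
    (S : nat -> Prop) (P : 'I_r -> nat -> nat -> nat) :
  prime p -> 0 < r ->
  (forall y, V y -> is_Zp_vec p y) ->
  infinite_set S ->
  (forall k, is_ZpTate p (P k)) ->
  (forall y, is_Zp_vec p y -> ~ V y -> forall n, ~ fiber p P S y n) ->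
  (forall y, V y -> finite_set (fiber p P S y)) ->
  exists N : nat, forall y, V y -> card_le (fiber p P S y) N.
Proof.
move=> pp r0 hVZ hinf hT hnV hfin.
case: (classic (exists i k m0, 0 < m0 /\ P i m0 k <> 0)) => [[i [k [m0 [m00 hm]]]]|hno].
  have [M hM] := (hT i).2 k.
  exists M => y Vy s us hs.
  apply: (@caseA p (P i) k m0 M (y i) s) => //; first by apply/eqP.
  by move=> n /hs [_]; apply.
exfalso.
have z : forall i k m, 0 < m -> P i m k = 0.
  move=> i k m m0; apply: NNPP => h; apply: hno; by exists i, k, m.
set y0 := fun i => P i 0.
have fib : forall n, S n -> fiber p P S y0 n.
  move=> n Sn; split => // i k; exists 1 => [[|M']] // _.
  rewrite big_ord_recl /= expn0 muln1 big1 ?addn0; last first.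
    by move=> j _; rewrite z.
  by rewrite modn_small //; case: ((hT i).1 0 k).
have vec : is_Zp_vec p y0 by move=> i; apply: (hT i).1.
have [n0 [_ Sn0]] := hinf 0.
case: (classic (V y0)) => hV; last by apply: (hnV y0 vec hV n0); apply: fib.
have [s hs] := hfin y0 hV.
have [n [hn Sn]] := hinf (sumn s).+1.
have := le_sumn (hs n (fib n Sn)); lia.
Qed.
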